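(* If a disjunctive program $P$ has an inconsistent module sequence, then $P$ is inconsistent.
   Context: A disjunctive program is a set of rules $A_1\vee\dots\vee A_m\leftarrow L_1,\dots,L_n$ ($m>0$, $n\ge0$), $A_j$ atoms, $L_i$ atoms or negated atoms $\mathtt{not}\,A$, possibly with function symbols. $\mathsf{Ground}(P)$ is its ground instantiation. For a set $M$ of ground atoms, $P^M$ is obtained from $\mathsf{Ground}(P)$ by deleting rules having some $\mathtt{not}\,B$ in the body with $B\in M$ and deleting the negative literals from the remaining rules; $M$ is a stable model iff it is a minimal Herbrand model of $P^M$. A program (ground or not) is consistent iff it has at least one stable model, inconsistent otherwise. The dependency graph has ground atoms as vertices and an edge $A\to B$ whenever some $r\in\mathsf{Ground}(P)$ has $A$ in its head and $B$ occurring in $r$ (body or head); $A$ depends on $B$ if there is a directed path from $A$ to $B$ (every atom depends on itself). With $GH$ the set of ground head atoms of $\mathsf{Ground}(P)$ and an enumeration $p_1,p_2,\dots$ of $GH$, the induced module sequence is $P_1=\{r\in\mathsf{Ground}(P)\mid p_1$ depends on some atom of $head(r)\}$, $P_{i+1}=P_i\cup\{r\in\mathsf{Ground}(P)\mid p_{i+1}$ depends on some atom of $head(r)\}$. A module sequence is inconsistent if some $P_i$ is inconsistent, and consistent otherwise. *)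

(* Defs.v *)
From Stdlib Require Import List Relations.
Import ListNotations.

Set Implicit Arguments.

(** A first-order signature: function symbols (constants have arity 0)
    and predicate symbols, each with an arity. *)
Record signature := {
  fsym : Type;
  farity : fsym -> nat;
  psym : Type;
  parity : psym -> nat
}.

Section Programs.
Variable S : signature.

Inductive term : Type :=
| Var : nat -> term
| App : fsym S -> list term -> term.

Inductive wf_term : term -> Prop :=
| wf_var : forall x, wf_term (Var x)
| wf_app : forall f l, length l = farity S f ->
    (forall t, In t l -> wf_term t) -> wf_term (App f l).

Inductive ground_term : term -> Prop :=
| ground_app : forall f l, length l = farity S f ->
    (forall t, In t l -> ground_term t) -> ground_term (App f l).

Record atom : Type := mkAtom { pred : psym S; args : list term }.

Definition wf_atom (a : atom) : Prop :=
  length (args a) = parity S (pred a) /\ forall t, In t (args a) -> wf_term t.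

Definition ground_atom (a : atom) : Prop :=
  length (args a) = parity S (pred a) /\ forall t, In t (args a) -> ground_term t.

Inductive literal : Type :=
| Pos : atom -> literal
| Neg : atom -> literal.

Definition lit_atom (l : literal) : atom :=
  match l with Pos a => a | Neg a => a end.

(** A rule  A_1 v ... v A_m <- L_1, ..., L_n. *)
Record rule : Type := mkRule { head : list atom; body : list literal }.

Definition wf_rule (r : rule) : Prop :=
  head r <> [] /\ (forall a, In a (head r) -> wf_atom a) /\
  (forall l, In l (body r) -> wf_atom (lit_atom l)).

Definition program := list rule.

Definition wf_program (P : program) : Prop := forall r, In r P -> wf_rule r.

Fixpoint subst_term (s : nat -> term) (t : term) : term :=
  match t with
  | Var x => s x
  | App f l => App f (map (subst_term s) l)
  end.

Definition subst_atom (s : nat -> term) (a : atom) : atom :=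
  mkAtom (pred a) (map (subst_term s) (args a)).

Definition subst_lit (s : nat -> term) (l : literal) : literal :=
  match l with Pos a => Pos (subst_atom s a) | Neg a => Neg (subst_atom s a) end.

Definition subst_rule (s : nat -> term) (r : rule) : rule :=
  mkRule (map (subst_atom s) (head r)) (map (subst_lit s) (body r)).

Definition ground_subst (s : nat -> term) : Prop := forall x, ground_term (s x).

(** A ground program is a (possibly infinite) set of ground rules. *)
Definition gprogram := rule -> Prop.

Definition Ground (P : program) : gprogram :=
  fun r' => exists r s, In r P /\ ground_subst s /\ r' = subst_rule s r.

Definition interp := atom -> Prop.

Definition pos_body (r : rule) : list atom :=
  flat_map (fun l => match l with Pos a => [a] | Neg _ => [] end) (body r).
Definition neg_body (r : rule) : list atom :=
  flat_map (fun l => match l with Pos _ => [] | Neg a => [a] end) (body r).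

Definition reduct (G : gprogram) (M : interp) : gprogram :=
  fun r' => exists r, G r /\ (forall B, In B (neg_body r) -> ~ M B) /\
            r' = mkRule (head r) (map Pos (pos_body r)).

Definition is_model (G : gprogram) (N : interp) : Prop :=
  forall r, G r ->
    (forall l, In l (body r) ->
       match l with Pos a => N a | Neg a => ~ N a end) ->
    exists a, In a (head r) /\ N a.

Definition minimal_herbrand_model (G : gprogram) (M : interp) : Prop :=
  (forall a, M a -> ground_atom a) /\ is_model G M /\
  forall N, (forall a, N a -> M a) -> is_model G N -> forall a, M a -> N a.

Definition stable_model (G : gprogram) (M : interp) : Prop :=
  minimal_herbrand_model (reduct G M) M.

Definition consistent (G : gprogram) : Prop := exists M, stable_model G M.

Definition dep_edge (P : program) (A B : atom) : Prop :=
  exists r, Ground P r /\ In A (head r) /\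
    (In B (head r) \/ exists l, In l (body r) /\ lit_atom l = B).

Definition depends (P : program) : atom -> atom -> Prop :=
  clos_refl_trans atom (dep_edge P).

Definition GH (P : program) (A : atom) : Prop :=
  exists r, Ground P r /\ In A (head r).

(** An enumeration p_0, p_1, ... of GH (finite or infinite): e i = Some p_i
    for i in an initial segment of nat, injective, with image exactly GH. *)
Definition enumeration_of_GH (P : program) (e : nat -> option atom) : Prop :=
  (forall i j, i <= j -> e j <> None -> e i <> None) /\
  (forall i j a, e i = Some a -> e j = Some a -> i = j) /\
  (forall a, GH P a <-> exists i, e i = Some a).

Definition module (P : program) (e : nat -> option atom) (i : nat) : gprogram :=
  fun r => Ground P r /\
    exists j a h, j <= i /\ e j = Some a /\ In h (head r) /\ depends P a h.

Definition inconsistent_module_sequence (P : program) (e : nat -> option atom) : Prop :=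
  exists i, e i <> None /\ ~ consistent (module P e i).

End Programs.

(* Main.v *)
Require Import Defs.
From Stdlib Require Import List Relations Classical.
Import ListNotations.

Lemma pos_body_in (S : signature) (r : rule S) a :
  In a (pos_body r) -> In (Pos a) (Defs.body r).
Proof.
  unfold pos_body. intros H. apply in_flat_map in H as [l [Hl Ha]].
  destruct l; simpl in Ha; [destruct Ha as [<-|[]]; auto | destruct Ha].
Qed.

Lemma neg_body_in (S : signature) (r : rule S) a :
  In (Neg a) (Defs.body r) -> In a (neg_body r).
Proof.
  unfold neg_body. intros H. apply in_flat_map. exists (Neg a). simpl; auto.
Qed.

Lemma pos_body_in' (S : signature) (r : rule S) a :
  In (Pos a) (Defs.body r) -> In a (pos_body r).
Proof.
  unfold pos_body. intros H. apply in_flat_map. exists (Pos a). simpl; auto.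
Qed.

Lemma neg_body_in' (S : signature) (r : rule S) a :
  In a (neg_body r) -> In (Neg a) (Defs.body r).
Proof.
  unfold neg_body. intros H. apply in_flat_map in H as [l [Hl Ha]].
  destruct l; simpl in Ha; [destruct Ha | destruct Ha as [<-|[]]; auto].
Qed.

Lemma in_map_Pos (S : signature) (l : list (atom S)) x :
  In x (map (@Pos S) l) -> exists a, x = Pos a /\ In a l.
Proof. intros H. apply in_map_iff in H as [a [<- Ha]]. eauto. Qed.

Theorem proposition3p8 (S : signature) (P : program S) :
  wf_program P ->
  (exists e, enumeration_of_GH P e /\ inconsistent_module_sequence P e) ->
  ~ consistent (Ground P).
Proof.
  intros _ [e [_ [i [_ Hinc]]]] [M [HMg [HMm HMmin]]].
  set (U := fun a => exists j p, j <= i /\ e j = Some p /\ depends P p a).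
  assert (HU : forall r, module P e i r ->
     (forall B, In B (Defs.head r) -> U B) /\
     (forall l, In l (Defs.body r) -> U (lit_atom l))).
  { intros r [Hg [j [p [h [Hj [Hp [Hh Hd]]]]]]]. split.
    - intros B HB. exists j, p. split; [exact Hj|]. split; [exact Hp|].
      eapply rt_trans; [exact Hd|]. apply rt_step. exists r. repeat split; auto.
    - intros l Hl. exists j, p. split; [exact Hj|]. split; [exact Hp|].
      eapply rt_trans; [exact Hd|]. apply rt_step. exists r. repeat split; eauto. }
  apply Hinc. exists (fun a => M a /\ U a). split; [|split].
  - intros a [Ha _]. auto.
  - intros r' [r [Hr [Hneg ->]]] Hb. simpl in *.
    destruct (HU r Hr) as [Hh Hbd].
    destruct (HMm (mkRule (Defs.head r) (map (@Pos S) (pos_body r)))) as [a [Ha HMa]].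
    + exists r. split; [exact (proj1 Hr)|]. split; auto.
      intros B HB HMB. apply (Hneg B HB). split; auto.
      apply (Hbd (Neg B)). apply neg_body_in'; auto.
    + intros l Hl. simpl in Hl. destruct (in_map_Pos _ _ _ Hl) as [b [-> Hb']].
      specialize (Hb _ Hl). simpl in Hb. tauto.
    + exists a. simpl in Ha. auto.
  - intros N HN HNm a [HMa HUa].
    set (N' := fun a => N a \/ (M a /\ ~ U a)).
    assert (Hsub : forall a, N' a -> M a).
    { intros b [Hb|[Hb _]]; [apply HN in Hb; tauto | auto]. }
    assert (HN'm : is_model (reduct (Ground P) M) N').
    { intros r' [r [Hr [Hneg ->]]] Hb. simpl in *.
      destruct (classic (exists h, In h (Defs.head r) /\ U h)) as [[h [Hh HUh]]|Hno].
      - assert (Hmod : module P e i r).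
        { split; auto. destruct HUh as [j [p [Hj [Hp Hd]]]].
          exists j, p, h. auto. }
        destruct (HU r Hmod) as [Hhd Hbd].
        destruct (HNm (mkRule (Defs.head r) (map (@Pos S) (pos_body r)))) as [b [Hb1 Hb2]].
        + exists r. split; auto. split; auto.
          intros B HB [HMB _]. exact (Hneg B HB HMB).
        + intros l Hl. simpl in Hl. destruct (in_map_Pos _ _ _ Hl) as [c [-> Hc]].
          specialize (Hb _ Hl). simpl in Hb. destruct Hb as [Hb|[_ Hb]]; auto.
          exfalso. apply Hb. apply (Hbd (Pos c)). apply pos_body_in; auto.
        + exists b. unfold N'. auto.
      - destruct (HMm (mkRule (Defs.head r) (map (@Pos S) (pos_body r)))) as [b [Hb1 Hb2]].
        + exists r. auto.
        + intros l Hl. simpl in Hl. destruct (in_map_Pos _ _ _ Hl) as [c [-> Hc]].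
          specialize (Hb _ Hl). simpl in Hb. auto.
        + exists b. split; auto. right. split; auto.
          intros HUb. apply Hno. eauto. }
    destruct (HMmin N' Hsub HN'm a HMa) as [H|[_ H]]; tauto.
Qed.
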